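(* Let $T$ be a ring and $\mathcal A$ a multiplicatively closed right Ore subset of regular elements of $T$ with $1\in\mathcal A$. Suppose there exists a right $T$-module $V$ such that the injective hull $E_{T\mathcal A^{-1}}(V\otimes_T T\mathcal A^{-1})$ is not locally Artinian as a $T\mathcal A^{-1}$-module. Then $E_T(V/\tau(V))$ is not a locally Artinian $T$-module, where $\tau(V)$ is the $\mathcal A$-torsion submodule of $V$.
   Context: A module is locally Artinian if every finitely generated submodule is Artinian. $\tau(V)=\{v\in V: va=0 \text{ for some } a\in\mathcal A\}$. *)

(* Defs.v *)
(* Modules: a right R-module is an [lmodType R^c]
   (v . t  is written  (t : R^c) *: v). *)
From HB Require Import structures.
From mathcomp Require Import all_boot all_order all_algebra.
Set Implicit Arguments. Unset Strict Implicit. Unset Printing Implicit Defensive.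
Import GRing.Theory.
Local Open Scope ring_scope.

Definition submodule (R : pzRingType) (M : lmodType R) (P : M -> Prop) : Prop :=
  [/\ P 0, (forall x y, P x -> P y -> P (x + y)) & (forall (a : R) x, P x -> P (a *: x))].

Definition is_linear (R : pzRingType) (M N : lmodType R) (f : M -> N) : Prop :=
  (forall x y, f (x + y) = f x + f y) /\ (forall (a : R) x, f (a *: x) = a *: f x).

Definition fin_gen (R : pzRingType) (M : lmodType R) (N : M -> Prop) : Prop :=
  exists s : seq M, forall x,
    N x <-> exists c : 'I_(size s) -> R, x = \sum_(i < size s) c i *: s`_i.

Definition artinian_sub (R : pzRingType) (M : lmodType R) (N : M -> Prop) : Prop :=
  forall C : nat -> M -> Prop,
    (forall n, submodule (C n)) ->
    (forall x, C 0%N x -> N x) ->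
    (forall n x, C n.+1 x -> C n x) ->
    exists n, forall m, (n <= m)%N -> forall x, C m x <-> C n x.

Definition locally_artinian (R : pzRingType) (M : lmodType R) : Prop :=
  forall N : M -> Prop, submodule N -> fin_gen N -> artinian_sub N.

Definition injective_module (R : pzRingType) (E : lmodType R) : Prop :=
  forall (X Y : lmodType R) (f : X -> Y) (g : X -> E),
    is_linear f -> injective f -> is_linear g ->
    exists h : Y -> E, is_linear h /\ forall x, h (f x) = g x.

Definition essential_image (R : pzRingType) (M E : lmodType R) (f : M -> E) : Prop :=
  forall N : E -> Prop, submodule N -> (exists x, N x /\ x <> 0) ->
    exists m, N (f m) /\ f m <> 0.

Definition injective_hull (R : pzRingType) (M E : lmodType R) (e : M -> E) : Prop :=
  [/\ is_linear e, injective e, essential_image e & injective_module E].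

(* (E, f) is an injective hull of M/K, given through f : M -> E linear with
   kernel exactly K (i.e. f induces the embedding M/K -> E) *)
Definition injective_hull_quot (R : pzRingType) (M E : lmodType R)
    (K : M -> Prop) (f : M -> E) : Prop :=
  [/\ is_linear f, (forall v, f v = 0 <-> K v), essential_image f & injective_module E].

Definition torsion (T : pzRingType) (A : T -> Prop) (V : lmodType T^c) (v : V) : Prop :=
  exists a : T, A a /\ (a : T^c) *: v = 0.

Definition right_ore_regular (T : pzRingType) (A : T -> Prop) : Prop :=
  [/\ A 1,
      (forall a b, A a -> A b -> A (a * b)),
      (forall a, A a -> forall t, (a * t = 0 -> t = 0) /\ (t * a = 0 -> t = 0)) &
      (forall (t a : T), A a -> exists t' a', A a' /\ t * a' = a * t')].

Definition right_fractions (T : nzRingType) (A : T -> Prop) (Q : unitRingType)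
    (phi : {rmorphism T -> Q}) : Prop :=
  [/\ (forall a, A a -> phi a \is a GRing.unit),
      (forall q : Q, exists t a, A a /\ q = phi t * (phi a)^-1) &
      (forall t, phi t = 0 <-> exists a, A a /\ t * a = 0)].

(* (W, iota) is V (x)_T Q, characterized by its universal property:
   iota : V -> W is T-semilinear and every T-semilinear map from V to a right
   Q-module factors uniquely through a Q-linear map W -> X *)
Definition is_semilinear (T : nzRingType) (Q : unitRingType) (phi : {rmorphism T -> Q})
    (V : lmodType T^c) (X : lmodType Q^c) (f : V -> X) : Prop :=
  (forall x y, f (x + y) = f x + f y) /\
  (forall (t : T) x, f ((t : T^c) *: x) = (phi t : Q^c) *: f x).

Definition tensor_ext (T : nzRingType) (Q : unitRingType) (phi : {rmorphism T -> Q})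
    (V : lmodType T^c) (W : lmodType Q^c) (iota : V -> W) : Prop :=
  is_semilinear phi iota /\
  forall (X : lmodType Q^c) (f : V -> X), is_semilinear phi f ->
    exists g : W -> X, [/\ is_linear g, (forall v, g (iota v) = f v) &
      forall g' : W -> X, is_linear g' -> (forall v, g' (iota v) = f v) ->
        forall w, g' w = g w].

(* Main.v *)
Require Import Defs.
From HB Require Import structures.
From mathcomp Require Import all_boot all_order all_algebra.
From mathcomp Require Import boolp.
From Stdlib Require Import ClassicalEpsilon.
Set Implicit Arguments. Unset Strict Implicit. Unset Printing Implicit Defensive.
Import GRing.Theory.
Local Open Scope ring_scope.
Section Res.
Variables (T : nzRingType) (Q : unitRingType) (phi : {rmorphism T -> Q}) (M : lmodType Q^c).
Definition resM : Type := (fun _ => M) phi.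
HB.instance Definition _ := GRing.Zmodule.on resM.
Definition res_scale (t : T^c) (x : resM) : resM := ((phi t : Q^c) *: (x : M)).
Lemma res_scaleA a b v : res_scale a (res_scale b v) = res_scale (a * b) v.
Proof. by rewrite /res_scale scalerA /= rmorphM. Qed.
Lemma res_scale1 : left_id 1 res_scale.
Proof. by move=> v; rewrite /res_scale rmorph1 scale1r. Qed.
Lemma res_scaleDr : right_distributive res_scale +%R.
Proof. by move=> a x y; rewrite /res_scale scalerDr. Qed.
Lemma res_scaleDl v : {morph res_scale^~ v: a b / a + b}.
Proof. by move=> a b; rewrite /res_scale rmorphD scalerDl. Qed.
HB.instance Definition _ := GRing.Zmodule_isLmodule.Build T^c resM res_scaleA res_scale1 res_scaleDr res_scaleDl.
End Res.

Section Sub.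
Variables (R : pzRingType) (M : lmodType R) (P : M -> Prop).
Hypotheses (P0 : P 0) (PD : forall x y, P x -> P y -> P (x + y)) (PZ : forall (a : R) x, P x -> P (a *: x)).
Definition subM : Type := (fun _ _ _ => {x : M | `[< P x >]}) P0 PD PZ.
HB.instance Definition _ := Choice.on subM.
Let PN x : P x -> P (- x).
Proof. by move=> Px; rewrite -scaleN1r; apply: PZ. Qed.
Definition sub0 : subM := exist _ 0 (asboolT P0).
Definition subadd (x y : subM) : subM := exist _ (val x + val y) (asboolT (PD (asboolW (valP x)) (asboolW (valP y)))).
Definition subopp (x : subM) : subM := exist _ (- val x) (asboolT (PN (asboolW (valP x)))).
Lemma subaddA : associative subadd. Proof. by move=> x y z; apply: val_inj; rewrite /= addrA. Qed.
Lemma subaddC : commutative subadd. Proof. by move=> x y; apply: val_inj; rewrite /= addrC. Qed.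
Lemma subadd0 : left_id sub0 subadd. Proof. by move=> x; apply: val_inj; rewrite /= add0r. Qed.
Lemma subaddN : left_inverse sub0 subopp subadd. Proof. by move=> x; apply: val_inj; rewrite /= addNr. Qed.
HB.instance Definition _ := GRing.isZmodule.Build subM subaddA subaddC subadd0 subaddN.
Definition subscale (a : R) (x : subM) : subM := exist _ (a *: val x) (asboolT (PZ a (asboolW (valP x)))).
Lemma subscaleA a b v : subscale a (subscale b v) = subscale (a * b) v.
Proof. by apply: val_inj; rewrite /= scalerA. Qed.
Lemma subscale1 : left_id 1 subscale. Proof. by move=> v; apply: val_inj; rewrite /= scale1r. Qed.
Lemma subscaleDr : right_distributive subscale +%R.
Proof. by move=> a x y; apply: val_inj; rewrite /= scalerDr. Qed.
Lemma subscaleDl v : {morph subscale^~ v: a b / a + b}.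
Proof. by move=> a b; apply: val_inj; rewrite /= scalerDl. Qed.
HB.instance Definition _ := GRing.Zmodule_isLmodule.Build R subM subscaleA subscale1 subscaleDr subscaleDl.
Lemma val_sub_add (x y : subM) : val (x + y) = val x + val y. Proof. by []. Qed.
Lemma val_sub_scale a (x : subM) : val (a *: x) = a *: val x. Proof. by []. Qed.
Lemma subM_ext (x y : subM) : sval x = sval y -> x = y.
Proof. by move=> H; apply: val_inj. Qed.
End Sub.

Definition act (T : nzRingType) (M : lmodType T^c) (y : M) (t : T) : M := (t : T^c) *: y.

Lemma actA (T : nzRingType) (M : lmodType T^c) (y : M) u v : act (act y u) v = act y (u * v).
Proof. by rewrite /act scalerA. Qed.
Lemma act1 (T : nzRingType) (M : lmodType T^c) (y : M) : act y 1 = y.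
Proof. by rewrite /act scale1r. Qed.
Lemma actDr (T : nzRingType) (M : lmodType T^c) (y z : M) t : act (y + z) t = act y t + act z t.
Proof. by rewrite /act scalerDr. Qed.
Lemma actDl (T : nzRingType) (M : lmodType T^c) (y : M) t s : act y (t + s) = act y t + act y s.
Proof. by rewrite /act scalerDl. Qed.
Lemma actBr (T : nzRingType) (M : lmodType T^c) (y z : M) t : act (y - z) t = act y t - act z t.
Proof. by rewrite /act scalerBr. Qed.
Lemma actBl (T : nzRingType) (M : lmodType T^c) (y : M) t s : act y (t - s) = act y t - act y s.
Proof. by rewrite /act scalerBl. Qed.
Lemma act0 (T : nzRingType) (M : lmodType T^c) (y : M) : act y 0 = 0.
Proof. by rewrite /act scale0r. Qed.
Lemma act0l (T : nzRingType) (M : lmodType T^c) t : act (0 : M) t = 0.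
Proof. by rewrite /act scaler0. Qed.

Section QStr.
Variables (T : nzRingType) (A : T -> Prop) (Q : unitRingType) (phi : {rmorphism T -> Q}).
Hypothesis HA : right_ore_regular A.
Hypothesis HF : right_fractions A phi.
Variable M : lmodType T^c.
Hypothesis tf : forall a (y : M), A a -> act y a = 0 -> y = 0.
Hypothesis dv : forall a (y : M), A a -> exists z, act z a = y.

Lemma AM a b : A a -> A b -> A (a * b).
Proof. by move: HA; rewrite /right_ore_regular => -[_ H _ _]; apply: H. Qed.
Lemma Aunit a : A a -> phi a \is a GRing.unit.
Proof. by move: HF; rewrite /right_fractions => -[H _ _]; apply: H. Qed.
Lemma fsurj (q : Q) : exists t a, A a /\ q = phi t * (phi a)^-1.
Proof. by move: HF; rewrite /right_fractions => -[_ H _]; apply: H. Qed.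
Lemma fker t : phi t = 0 -> exists a, A a /\ t * a = 0.
Proof. by move: HF; rewrite /right_fractions => -[_ _ H]; exact: (proj1 (H t)). Qed.

Lemma fsurj' (q : Q) : exists t a, A a /\ q * phi a = phi t.
Proof.
have [t [a [Aa ->]]] := fsurj q; exists t, a; split => //.
by rewrite -mulrA mulVr ?mulr1 // Aunit.
Qed.

Lemma eq_phi_ker t s : phi t = phi s -> exists b, A b /\ t * b = s * b.
Proof.
move=> H; have [b [Ab Hb]] : exists b, A b /\ (t - s) * b = 0.
  by apply: fker; rewrite rmorphB H subrr.
by exists b; split => //; apply/eqP; rewrite -subr_eq0 -mulrBl Hb.
Qed.

Definition Prep (q : Q) (y z : M) := exists t a, [/\ A a, q * phi a = phi t & act z a = act y t].

Lemma key q (y z : M) t a r s : A a -> q * phi a = phi t -> act z a = act y t ->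
  q * phi r = phi s -> act z r = act y s.
Proof.
move=> Aa Hq Hz Hr.
have [r' [c [Ac Hc]]] := fsurj' ((phi a)^-1 * phi r).
have ua := Aunit Aa.
have E1 : phi (r * c) = phi (a * r').
  by rewrite !rmorphM -Hc !mulrA mulrV // mul1r.
have Qe : q = phi t * (phi a)^-1 by rewrite -Hq -mulrA mulrV ?mulr1.
have E2 : phi (s * c) = phi (t * r').
  by rewrite rmorphM -Hr Qe -!mulrA (mulrA (phi a)^-1) Hc rmorphM.
have [b' [Ab' Hb']] := eq_phi_ker E1.
have E3 : phi (t * r' * b') = phi (s * c * b').
  by rewrite !(rmorphM _ _ b') E2.
have [b [Ab Hb]] := eq_phi_ker E3.
have Ad : A (c * (b' * b)) by apply: AM => //; apply: AM.
apply/eqP; rewrite -subr_eq0; apply/eqP; apply: (tf Ad).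
rewrite actBr !actA.
have -> : r * (c * (b' * b)) = a * (r' * b' * b) by rewrite !mulrA Hb'.
rewrite -actA Hz actA.
have -> : t * (r' * b' * b) = s * (c * (b' * b)) by rewrite !mulrA Hb.
by rewrite subrr.
Qed.

Lemma Prep_uniq q (y z z' : M) : Prep q y z -> Prep q y z' -> z = z'.
Proof.
move=> [t [a [Aa Hq Hz]]] [t' [a' [Aa' Hq' Hz']]].
apply/eqP; rewrite -subr_eq0; apply/eqP; apply: (tf Aa').
by rewrite actBr Hz' (key Aa Hq Hz Hq') subrr.
Qed.

Lemma Prep_ex q (y : M) : exists z, Prep q y z.
Proof.
have [t [a [Aa Hq]]] := fsurj' q.
have [z Hz] := dv (act y t) Aa.
by exists z, t, a.
Qed.

Definition qs (q : Q) (y : M) : M := epsilon (inhabits 0) (Prep q y).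

Lemma qsP q (y : M) : Prep q y (qs q y).
Proof. by rewrite /qs; apply: epsilon_spec; apply: Prep_ex. Qed.

Lemma qsE q (y z : M) : Prep q y z -> qs q y = z.
Proof. by move=> H; apply: Prep_uniq H; apply: qsP. Qed.

Lemma qs_key q (y : M) r s : q * phi r = phi s -> act (qs q y) r = act y s.
Proof. move: (qsP q y) => [t [a [Aa Hq Hz]]]; exact: (key Aa Hq Hz). Qed.

Lemma qs_phi t (y : M) : qs (phi t) y = act y t.
Proof. by apply: qsE; exists t, 1; rewrite rmorph1 mulr1 act1; split => //; move: HA; rewrite /right_ore_regular => -[]. Qed.

Lemma common2 (q1 q2 : Q) : exists c r1 r2, [/\ A c, q1 * phi c = phi r1 & q2 * phi c = phi r2].
Proof.
have [r1 [c1 [Ac1 H1]]] := fsurj' q1.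
have [t [b [Ab Hb]]] := fsurj' (q2 * phi c1).
exists (c1 * b), (r1 * b), t; split.
- exact: AM.
- by rewrite !rmorphM mulrA H1.
- by rewrite rmorphM mulrA Hb.
Qed.

Definition MQ : Type := (fun _ _ _ _ => M) HA HF tf dv.
HB.instance Definition _ := GRing.Zmodule.on MQ.
Definition qscale (q : Q^c) (y : MQ) : MQ := qs q y.

Lemma qscaleA' (a b : Q) (v : M) : qs a (qs b v) = qs (b * a) v.
Proof.
have [t2 [a2 [Aa2 H2]]] := fsurj' a.
have [s [c [Ac Hc]]] := fsurj' (b * phi t2).
apply/esym/qsE; exists s, (a2 * c); split.
- exact: AM.
- by rewrite rmorphM -!mulrA (mulrA a) H2 mulrA Hc.
- rewrite -actA (qs_key _ H2) actA; apply: qs_key.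
  by rewrite rmorphM mulrA Hc.
Qed.

Lemma qscaleA a b v : qscale a (qscale b v) = qscale (a * b) v.
Proof. exact: qscaleA'. Qed.

Lemma qscale1 : left_id 1 qscale.
Proof. by move=> v; have := qs_phi 1 v; rewrite rmorph1 act1. Qed.

Lemma qscaleDr : right_distributive qscale +%R.
Proof.
move=> q x y; rewrite /qscale /=.
have [t [a [Aa H]]] := fsurj' q.
apply: qsE; exists t, a; split => //.
by rewrite actDr !(qs_key _ H) actDr.
Qed.

Lemma qscaleDl v : {morph qscale^~ v: a b / a + b}.
Proof.
move=> q1 q2; rewrite /qscale /=.
have [c [r1 [r2 [Ac H1 H2]]]] := common2 q1 q2.
apply: qsE; exists (r1 + r2), c; split => //.
- by rewrite mulrDl H1 H2 rmorphD.
- by rewrite actDr (qs_key _ H1) (qs_key _ H2) actDl.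
Qed.

HB.instance Definition _ := GRing.Zmodule_isLmodule.Build Q^c MQ qscaleA qscale1 qscaleDr qscaleDl.

Lemma MQ_scale (q : Q) (y : MQ) : (q : Q^c) *: y = qs q y.
Proof. by []. Qed.
End QStr.


Lemma divisible_inj (T : nzRingType) (A : T -> Prop) (HA : right_ore_regular A)
  (M : lmodType T^c) : injective_module M -> forall a (y : M), A a -> exists z, act z a = y.
Proof.
move=> Hinj a y Aa.
have reg : forall t, a * t = 0 -> t = 0.
  by move: HA; rewrite /right_ore_regular => -[_ _ H _] t; case: (H a Aa t).
pose fl := fun x : T^c^o => (@GRing.mul T a x : T^c^o).
pose g := fun x : T^c^o => ((x : T^c) *: y : M).
have lf : is_linear fl.
  split; first by move=> x z; rewrite /fl mulrDr.
  by move=> s x; rewrite /fl /= mulrA.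
have fi : injective fl.
  move=> x z; rewrite /fl => H; apply/eqP; rewrite -subr_eq0; apply/eqP; apply: reg.
  by rewrite mulrBr H subrr.
have lg : is_linear g.
  split; first by move=> x z; rewrite /g scalerDl.
  by move=> s x; rewrite /g scalerA.
have [h [lh Hh]] := Hinj _ _ fl g lf fi lg.
exists (h 1); rewrite /act.
have := Hh 1; rewrite /fl /g /= scale1r.
have -> : (@GRing.mul T a (1 : T^c^o) : T^c^o) = (a : T^c) *: (1 : T^c^o).
  by change (@GRing.mul T a 1 = @GRing.mul T 1 a); rewrite mulr1 mul1r.
by case: lh => _ ->.
Qed.

Lemma torsionfree_hull (T : nzRingType) (A : T -> Prop) (HA : right_ore_regular A)
  (V E : lmodType T^c) (f : V -> E) : injective_hull_quot (torsion A (V := V)) f ->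
  forall a (y : E), A a -> act y a = 0 -> y = 0.
Proof.
move=> [[fD fZ] fker fess _] a y Aa Hy.
have [AM ore] : (forall a b, A a -> A b -> A (a * b)) /\
    (forall (t a : T), A a -> exists t' a', A a' /\ t * a' = a * t').
  by move: HA; rewrite /right_ore_regular => -[_ H1 _ H2].
case: (eqVneq y 0) => // ny; exfalso.
pose N := fun x : E => exists t, x = act y t.
have sN : submodule N.
  split.
  - by exists 0; rewrite /act scale0r.
  - by move=> x z [t ->] [s ->]; exists (t + s); rewrite /act scalerDl.
  - by move=> s x [t ->]; exists (t * s); rewrite -actA.
have ex0 : exists x, N x /\ x <> 0 by exists y; split; [exists 1; rewrite act1 | apply/eqP].
have [v [[t Hv] nv]] := fess N sN ex0.
have [t' [a' [Aa' Ht]]] := ore t a Aa.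
have H0 : f (act v a') = 0 by rewrite /act fZ -/(act _ _) Hv actA Ht -actA Hy /act scaler0.
have [b [Ab Hb]] := (proj1 (fker _) H0).
apply: nv; apply/(fker v); exists (a' * b); split; first exact: AM.
by move: Hb; rewrite -/(act _ _) -/(act _ _) actA.
Qed.


Section Gen.
Variables (T : nzRingType) (A : T -> Prop) (Q : unitRingType) (phi : {rmorphism T -> Q}).
Hypothesis HA : right_ore_regular A.
Hypothesis HF : right_fractions A phi.
Variables (V : lmodType T^c) (W : lmodType Q^c) (iota : V -> W).
Hypothesis Hi : tensor_ext phi iota.

Let iD : forall x y, iota (x + y) = iota x + iota y. Proof. by case: Hi => -[]. Qed.
Let iZ : forall (t : T) x, iota ((t : T^c) *: x) = (phi t : Q^c) *: iota x.
Proof. by case: Hi => -[]. Qed.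
Let i0 : iota 0 = 0.
Proof. by have := iD 0 0; rewrite addr0 => /(congr1 (fun z => z - iota 0)); rewrite addrK subrr. Qed.

Definition Sg (w : W) := exists a v, A a /\ (phi a : Q^c) *: w = iota v.

Lemma Sg0 : Sg 0. Proof. exists 1, 0; split; [by move: HA => -[] | by rewrite scaler0 i0]. Qed.
Lemma SgD x y : Sg x -> Sg y -> Sg (x + y).
Proof.
move=> [a1 [v1 [A1 H1]]] [a2 [v2 [A2 H2]]].
have [t' [a' [Aa' E]]] : exists t' a', A a' /\ a2 * a' = a1 * t'.
  by move: HA => -[_ _ _ H]; apply: H.
exists (a2 * a'), ((t' : T^c) *: v1 + (a' : T^c) *: v2); split.
  by apply: (AM HA).
rewrite scalerDr iD !iZ -H1 -H2 !scalerA; congr (_ + _); congr (_ *: _).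
  by rewrite E rmorphM.
by rewrite rmorphM.
Qed.
Lemma SgZ (q : Q^c) x : Sg x -> Sg (q *: x).
Proof.
move=> [a [v [Aa H]]].
have [u [c [Ac Hc]]] := fsurj' HF ((phi a)^-1 * (q : Q)).
exists c, ((u : T^c) *: v); split => //.
rewrite iZ -H !scalerA.
congr (_ *: _).
change ((q : Q) * phi c = phi a * phi u).
by rewrite -Hc !mulrA mulrV ?mul1r // (Aunit HF).
Qed.

Lemma gen w : Sg w.
Proof.
have Si : forall v, `[< Sg (iota v) >].
  by move=> v; apply/asboolP; exists 1, v; split; [by move: HA => -[] | by rewrite rmorph1 scale1r].
pose X := subM Sg0 SgD SgZ.
pose io' := fun v => (exist _ (iota v) (Si v) : X).
have sl : is_semilinear phi io'.
  split; first by move=> x y; apply: subM_ext; rewrite /= iD.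
  by move=> t x; apply: subM_ext; rewrite /= iZ.
case: Hi => _ /(_ X io' sl) [g [[gD gZ] gi guniq]].
have l1 : is_linear (fun w => sval (g w)).
  by split; [move=> x y; rewrite gD | move=> a x; rewrite gZ].
have l2 : is_linear (fun w : W => w) by [].
case: Hi => _ /(_ W iota (proj1 Hi)) [g0 [_ _ u0]].
have E1 := u0 _ l1 (fun v => congr1 sval (gi v)).
have E2 := u0 _ l2 (fun v => erefl).
have -> : w = sval (g w) by rewrite E1 -E2.
exact: (asboolW (svalP (g w))).
Qed.
End Gen.


Lemma common_fin (T : nzRingType) (A : T -> Prop) (Q : unitRingType) (phi : {rmorphism T -> Q})
  (HA : right_ore_regular A) (HF : right_fractions A phi) (I : eqType) (q : I -> Q) (l : seq I) :
  exists d (r : I -> T), A d /\ forall i, i \in l -> q i * phi d = phi (r i).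
Proof.
elim: l => [|x l [d [r [Ad Hr]]]].
  by exists 1, (fun _ => 0); split => //; move: HA => -[].
have [t [b [Ab Hb]]] := fsurj' HF (q x * phi d).
exists (d * b), (fun i => if i == x then t else r i * b); split; first exact: (AM HA).
move=> i; rewrite inE; case: eqP => [-> _|_ /= il].
  by rewrite rmorphM mulrA.
by rewrite rmorphM mulrA Hr // rmorphM.
Qed.

Lemma lin_sum (R : pzRingType) (M N : lmodType R) (h : M -> N) (n : nat) (F : 'I_n -> M) :
  (forall x y, h (x + y) = h x + h y) -> h (\sum_(i < n) F i) = \sum_(i < n) h (F i).
Proof.
move=> hD.
have h0 : h 0 = 0.
  by have := hD 0 0; rewrite addr0 => /(congr1 (fun z => z - h 0)); rewrite addrK subrr.
by elim/big_rec2: _ => // i y1 y2 _ <-; rewrite hD.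
Qed.

Lemma transfer (T : nzRingType) (A : T -> Prop) (Q : unitRingType) (phi : {rmorphism T -> Q})
  (HA : right_ore_regular A) (HF : right_fractions A phi)
  (E : lmodType Q^c) (E' : lmodType T^c) (h : resM phi E -> E') :
  is_linear h -> injective h -> locally_artinian E' -> locally_artinian E.
Proof.
move=> [hD hZ] hi LA N sN [s Hs] C sC C0 Cdec.
have h0 : h 0 = 0.
  by have := hD 0 0; rewrite addr0 => /(congr1 (fun z => z - h 0)); rewrite addrK subrr.
have hZ' : forall (t : T) (x : E), h ((phi t : Q^c) *: x) = (t : T^c) *: h x.
  by move=> t x; exact: (hZ t x).
pose N' := fun y : E' => exists c : 'I_(size s) -> T^c, y = \sum_(i < size s) c i *: h s`_i.
pose NT := fun x : E => exists c : 'I_(size s) -> T, x = \sum_(i < size s) (phi (c i) : Q^c) *: s`_i.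
have sN' : submodule N'.
  split.
  - by exists (fun _ => 0); rewrite big1 // => i _; rewrite scale0r.
  - move=> x y [c ->] [c' ->]; exists (fun i => c i + c' i).
    by rewrite -big_split; apply: eq_bigr => i _; rewrite scalerDl.
  - move=> a x [c ->]; exists (fun i => a * c i); rewrite scaler_sumr.
    by apply: eq_bigr => i _; rewrite scalerA.
have fN' : fin_gen N'.
  exists (map h s) => y; rewrite size_map /N'.
  have E1 : forall i : 'I_(size s), (map h s)`_i = h s`_i.
    by move=> i; rewrite (nth_map 0).
  split => -[c ->]; exists c; apply: eq_bigr => i _; by rewrite E1.
pose D := fun n (y : E') => exists x, [/\ C n x, NT x & y = h x].
have Cmono : forall n m x, (n <= m)%N -> C m x -> C n x.
  move=> n m x /subnK <-; elim: (m - n)%N => // k IH; rewrite addSn => /Cdec; exact: IH.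
have sD : forall n, submodule (D n).
  move=> n; have [C00 CD CZ] := sC n; split.
  - exists 0; split; [exact: C00 | | exact: (esym h0)].
    by exists (fun _ => 0); rewrite big1 // => i _; rewrite rmorph0 scale0r.
  - move=> x y [x1 [C1 [c1 H1] ->]] [x2 [C2 [c2 H2] ->]].
    exists (x1 + x2); split; [by apply: CD | | exact: (esym (hD _ _))].
    exists (fun i => c1 i + c2 i); rewrite H1 H2 -big_split; apply: eq_bigr => i _.
    by rewrite rmorphD scalerDl.
  - move=> a y [x [Cx [c Hc] ->]].
    exists ((phi a : Q^c) *: x); split; [by apply: CZ | | exact: (esym (hZ' _ _))].
    exists (fun i => c i * a); rewrite Hc scaler_sumr; apply: eq_bigr => i _.
    by rewrite scalerA rmorphM.
have D0 : forall y, D 0%N y -> N' y.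
  move=> y [x [_ [c ->] ->]]; exists c; rewrite lin_sum //.
  by apply: eq_bigr => i _; rewrite hZ'.
have Ddec : forall n y, D n.+1 y -> D n y.
  by move=> n y [x [Cx NTx ->]]; exists x; split => //; apply: Cdec.
have [n0 Hn0] := LA N' sN' fN' D sD D0 Ddec.
exists n0 => m le x; split; first exact: Cmono.
move=> Cx.
have Nx : N x by apply: C0; apply: (Cmono 0%N n0).
have [c Hc] := (proj1 (Hs x) Nx).
have [d [r [Ad Hr]]] := common_fin HA HF (fun i => (c i : Q)) (enum 'I_(size s)).
have ud := Aunit HF Ad.
pose x' := (phi d : Q^c) *: x.
have Cx' : C n0 x' by have [_ _ CZ] := sC n0; apply: CZ.
have NTx' : NT x'.
  exists r; rewrite /x' Hc scaler_sumr; apply: eq_bigr => i _.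
  rewrite scalerA; congr (_ *: _); exact: (Hr i (mem_enum _ i)).
have [x'' [Cx'' _ Hx'']] := proj2 (Hn0 m le (h x')) (ex_intro _ x' (And3 Cx' NTx' erefl)).
have <- : ((phi d)^-1 : Q^c) *: x' = x.
  rewrite /x' scalerA.
  have -> : (((phi d)^-1 : Q^c) * (phi d : Q^c)) = 1 by change (phi d * (phi d)^-1 = 1); rewrite mulrV.
  by rewrite scale1r.
have [_ _ CZ] := sC m; apply: CZ.
by rewrite (hi _ _ Hx'').
Qed.


Lemma add_zero (R1 R2 : zmodType) (h : R1 -> R2) :
  (forall x y, h (x + y) = h x + h y) -> h 0 = 0.
Proof.
by move=> hD; have := hD 0 0; rewrite addr0 => /(congr1 (fun z => z - h 0)); rewrite addrK subrr.
Qed.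

Lemma unit_cancel (Q : unitRingType) (M : lmodType Q^c) (u : Q) (x : M) :
  u \is a GRing.unit -> (u : Q^c) *: x = 0 -> x = 0.
Proof.
move=> uu H; rewrite -[x]scale1r.
have -> : (1 : Q^c) = ((u^-1 : Q^c) * (u : Q^c)) by change (1 = u * u^-1); rewrite mulrV.
by rewrite -scalerA H scaler0.
Qed.

Theorem lemma5p1 (T : nzRingType) (A : T -> Prop) (Q : unitRingType)
    (phi : {rmorphism T -> Q}) :
  right_ore_regular A -> right_fractions A phi ->
  forall V : lmodType T^c,
  (exists (W : lmodType Q^c) (iota : V -> W) (E : lmodType Q^c) (e : W -> E),
     [/\ tensor_ext phi iota, injective_hull e & ~ locally_artinian E]) ->
  forall (E' : lmodType T^c) (f : V -> E'),
    injective_hull_quot (torsion A (V := V)) f -> ~ locally_artinian E'.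
Proof.
move=> HA HF V [W [iota [E [e [Hi He HnLA]]]]] E' f Hf HLA.
apply: HnLA.
have tfE := torsionfree_hull HA Hf.
have injE' : injective_module E' by case: Hf.
have dvE := divisible_inj HA injE'.
pose EQ := MQ HA HF tfE dvE.
have [[fD fZ] fker _ _] := Hf.
pose fQ := (f : V -> EQ).
have slf : is_semilinear phi fQ.
  split; first by move=> x y; rewrite /fQ fD.
  move=> t x; rewrite /fQ MQ_scale (qs_phi HA HF tfE dvE) /act; exact: fZ.
have [[iD iZ] _] := Hi.
have [g0 [[g0D g0Z] g0i _]] := (proj2 Hi) EQ fQ slf.
have [[eD eZ] einj eess _] := He.
pose fe := (e : resM phi W -> resM phi E).
pose ge := (g0 : resM phi W -> E').
have lfe : is_linear fe.
  by split; [move=> x y; exact: eD | move=> t x; exact: eZ].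
have ife : injective fe by exact: einj.
have lge : is_linear ge.
  split; first by move=> x y; exact: g0D.
  move=> t x; rewrite /ge.
  have := g0Z (phi t) x; rewrite MQ_scale (qs_phi HA HF tfE dvE); exact.
have [h [[hD hZ] Hh]] := injE' _ _ fe ge lfe ife lge.
have h0 := add_zero hD.
have hZ' : forall (t : T) (x : E), h ((phi t : Q^c) *: x) = (t : T^c) *: h x.
  by move=> t x; exact: (hZ t x).
have hker : forall x : E, h x = 0 -> x = 0.
  move=> x hx; case: (eqVneq x 0) => // nx; exfalso.
  pose K := fun y : E => h y = 0.
  have sK : submodule K.
    split; first exact: h0.
    - by move=> y z; rewrite /K => Hy Hz; rewrite (hD y z) Hy Hz addr0.
    - move=> q y; rewrite /K => Hy.
      have [t [a [Aa Hq]]] := fsurj HF q.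
      have ua := Aunit HF Aa.
      rewrite /K; apply: (tfE _ _ Aa); rewrite /act -hZ' scalerA.
      have -> : ((phi a : Q^c) * q) = phi t.
        by change (@GRing.mul Q q (phi a) = phi t); rewrite Hq -mulrA mulVr // mulr1.
      by rewrite hZ' Hy scaler0.
  have ex0 : exists y, K y /\ y <> 0 by exists x; split => //; apply/eqP.
  have [w [Kw nw]] := eess K sK ex0.
  have [a [v [Aa Hw]]] := gen HA HF Hi w.
  have g0w : g0 w = 0 by have := Hh w; rewrite /fe /ge => <-; exact: Kw.
  have fv : f v = 0.
    have := g0i v; rewrite -Hw g0Z g0w scaler0 => H; exact: (esym H).
  have [b [Ab Hb]] := proj1 (fker v) fv.
  have iv : iota v = 0.
    apply: (unit_cancel (Aunit HF Ab)); rewrite -iZ Hb.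
    exact: (add_zero iD).
  apply: nw.
  have -> : w = 0 by apply: (unit_cancel (Aunit HF Aa)); rewrite Hw iv.
  exact: (add_zero eD).
apply: (transfer HA HF (h := h)) => //.
move=> x y Hxy; apply/eqP; rewrite -subr_eq0; apply/eqP; apply: hker.
have := hD (x - y) y; rewrite subrK Hxy => /(congr1 (fun z => z - h y)).
by rewrite addrK subrr => <-.
Qed.
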